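(* Let $p>q>1$ be relatively prime integers. Let $\mathbf{x}$ be a $\frac pq$-automatic sequence over a finite alphabet $B$ generated by a deterministic finite automaton with output $\mathcal{A}=(Q,q_0,A_p,\delta,\tau:Q\to B)$ with the following property: there exists an integer $h\ge0$ such that for all words $u,v\in L_{\frac pq}$ with $\mathrm{val}_{\frac pq}(u)\equiv\mathrm{val}_{\frac pq}(v)\pmod{q^h}$ and $\delta(q_0,u)\ne\delta(q_0,v)$, there exists a word $w\in u^{-1}L_{\frac pq}\cap A_p^{\le h}$ such that $\tau(\delta(q_0,uw))\ne\tau(\delta(q_0,vw))$. Then, in the tree $T(L_{\frac pq})$ decorated by $\mathbf{x}$, each factor in $F_h^\infty$ can be extended to at most one factor in $F^\infty_{h+1,w_{j,0}}$, for every $0\le j\le q-1$.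
   Context: $A_p=\{0,\ldots,p-1\}$; for $w=w_\ell\cdots w_0\in A_p^*$, $\mathrm{val}_{\frac pq}(w)=\sum_{i=0}^{\ell}\frac{w_i}{q}(\frac pq)^i$; $\mathrm{rep}_{\frac pq}(n)$ is the unique word not starting with $0$ of value $n$ ($\mathrm{rep}_{\frac pq}(0)=\varepsilon$); $L_{\frac pq}=\{\mathrm{rep}_{\frac pq}(n):n\ge0\}$; $w^{-1}L=\{u:wu\in L\}$. $\mathbf{x}$ is generated by $\mathcal{A}$ if $x_n=\tau(\delta(q_0,\mathrm{rep}_{\frac pq}(n)))$ for all $n$. $T(L_{\frac pq})$ is the tree whose nodes are the words of $L_{\frac pq}$, with an edge labeled $d$ from $w$ to $wd$ whenever both are in $L_{\frac pq}$; node $w$ is decorated by $x_{\mathrm{val}_{\frac pq}(w)}$. For $w\in L_{\frac pq}$, the factor $T[w,h]$ of height $h$ has domain $w^{-1}L_{\frac pq}\cap A_p^{\le h}$, with node $u$ decorated by $x_{\mathrm{val}_{\frac pq}(wu)}$; two factors of the same height are equal if they have the same domain and the same decorations. $F_h$ is the set of factors of height $h$; $F_h^\infty\subseteq F_h$ is the set of those equal to $T[w,h]$ for infinitely many $w\in L_{\frac pq}$. For a letter $a$, $F^\infty_{h,a}$ is the set of factors in $F^\infty_h$ whose radix-least word of length $h$ in the domain ends with $a$. A factor $U$ of height $h$ is extended to a factor $U'$ of height $h+1$ if the truncation of $U'$ to words of length at most $h$ (same decorations) equals $U$. For $0\le j\le q-1$, $w_j$ is the word listing in increasing order the letters $a\in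 A_p$ with $a\equiv -pj\pmod q$ (so that $(w_0,\ldots,w_{q-1})$ is the periodic labeled signature of $T(L_{\frac pq})$), and $w_{j,0}$ is its first letter. *)

(* Defs.v *)
From mathcomp Require Import all_boot all_order all_algebra.
Set Implicit Arguments. Unset Strict Implicit. Unset Printing Implicit Defensive.
Import Order.TTheory GRing.Theory Num.Theory.

Section RationalBase.
Variables (p q : nat).

(* Words w = w_l ... w_0 over A_p = {0,...,p-1}: the head of the list is the
   most significant letter w_l, the last element is w_0. *)
Definition word := seq 'I_p.

(* val_{p/q}(w) = sum_i w_i/q (p/q)^i, computed by Horner:
   val(w a) = val(w) * p/q + a/q. *)
Definition val (w : word) : rat :=
  foldl (fun acc (a : 'I_p) => acc * ((p%:R : rat) / (q%:R : rat)) + (a%:R : rat) / (q%:R : rat))%R 0%R w.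

(* the natural number n with val w = n, when val w is a natural number *)
Definition natval (w : word) : nat := `|numq (val w)|%N.

Definition no_leading_zero (w : word) : bool :=
  if w is a :: _ then nat_of_ord a != 0%N else true.

Definition is_rep (n : nat) (w : word) : bool :=
  no_leading_zero w && (val w == (n%:R : rat))%R.

(* w belongs to L_{p/q} = { rep(n) : n >= 0 }, i.e. w is rep(n) for some n
   (namely n = natval w). *)
Definition inL (w : word) : bool :=
  no_leading_zero w && (val w == ((natval w)%:R : rat))%R.

Variables (B Q : finType) (q0 : Q) (delta : Q -> 'I_p -> Q) (tau : Q -> B).

Definition deltaw (s : Q) (w : word) : Q := foldl delta s w.

Definition generated (x : nat -> B) : Prop :=
  forall (n : nat) (w : word), is_rep n w -> x n = tau (deltaw q0 w).

Definition aut_property (h : nat) : Prop :=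
  forall u v : word, inL u -> inL v ->
    natval u = natval v %[mod q ^ h] ->
    deltaw q0 u <> deltaw q0 v ->
    exists w : word, [/\ inL (u ++ w), (size w <= h)%N &
        tau (deltaw q0 (u ++ w)) <> tau (deltaw q0 (v ++ w))].

(* A factor (of some height) is represented by its decoration function:
   u |-> Some decoration if u is in the domain, None otherwise. *)
Definition factorT := word -> option B.

Definition feq (U V : factorT) : Prop := forall u, U u = V u.

Variable x : nat -> B.

(* T[w,h]: domain w^{-1}L ∩ A_p^{<=h}, node u decorated by x_{val(wu)} *)
Definition factor (w : word) (h : nat) : factorT :=
  fun u => if (size u <= h)%N && inL (w ++ u) then Some (x (natval (w ++ u))) else None.

(* U in F_h^infty: U equals T[w,h] for infinitely many w in L
   (the set of such w is not contained in any finite list) *)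
Definition in_Finf (h : nat) (U : factorT) : Prop :=
  ~ (exists s : seq word, forall w : word, inL w -> feq (factor w h) U -> w \in s).

(* lexicographic (= radix, for words of equal length) order *)
Fixpoint lexle (u v : seq nat) : bool :=
  match u, v with
  | [::], _ => true
  | _ :: _, [::] => false
  | a :: u', b :: v' => (a < b)%N || ((a == b) && lexle u' v')
  end.

Definition least_ends_with (h : nat) (a : nat) (U : factorT) : Prop :=
  exists u : word, [/\ size u = h, U u != None,
    (exists (s : word) (b : 'I_p), u = rcons s b /\ nat_of_ord b = a) &
    forall v : word, size v = h -> U v != None ->
      lexle (map (@nat_of_ord p) u) (map (@nat_of_ord p) v)].

Definition in_Finf_a (h : nat) (a : nat) (U : factorT) : Prop :=
  in_Finf h U /\ least_ends_with h a U.

Definition extends (h : nat) (U U' : factorT) : Prop :=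
  forall u : word, (size u <= h)%N -> U' u = U u.

End RationalBase.

Definition wj (p q j : nat) : seq nat := [seq a <- iota 0 p | q %| a + p * j].
Definition wj0 (p q j : nat) : nat := head 0%N (wj p q j).

(* Main.v *)
Require Import Defs.
From mathcomp Require Import all_boot all_order all_algebra.
From mathcomp Require Import ring lra zify.
Set Implicit Arguments. Unset Strict Implicit. Unset Printing Implicit Defensive.
Import Order.TTheory GRing.Theory Num.Theory.

Section Aux.
Variables (p q : nat).
Hypothesis q_gt0 : (0 < q)%N.

Local Notation V := (@Defs.val p q).
Local Open Scope ring_scope.
Definition rr : rat := (p%:R / q%:R).
Definition FF := (fun acc (a : 'I_p) => acc * ((p%:R : rat) / (q%:R : rat)) + (a%:R : rat) / (q%:R : rat)).

Lemma foldl_shift (b : word p) (c : rat) :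
  foldl FF c b = c * rr ^+ size b + foldl FF 0 b.
Proof.
elim: b c => [|a b IH] c /=; first by rewrite expr0 mulr1 addr0.
rewrite IH (IH (FF 0 a)) /FF /rr exprS; ring.
Qed.

Lemma val_cat (a b : word p) : V (a ++ b) = V a * rr ^+ size b + V b.
Proof. by rewrite /Defs.val foldl_cat -/FF foldl_shift. Qed.

Lemma val_rcons (w : word p) (a : 'I_p) : V (rcons w a) = V w * rr + a%:R / q%:R.
Proof. by rewrite /Defs.val foldl_rcons. Qed.

Lemma val_ge0 (w : word p) : 0 <= V w.
Proof.
elim/last_ind: w => [|w a IH]; first by rewrite /Defs.val.
rewrite val_rcons /rr; apply: addr_ge0; first apply: mulr_ge0 => //.
  by apply: divr_ge0.
by apply: divr_ge0.
Qed.

Lemma qR_neq0 : (q%:R : rat) != 0.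
Proof. by rewrite pnatr_eq0 -lt0n. Qed.

Lemma val_qnat (w : word p) : exists k : nat, V w * (q%:R) ^+ size w = k%:R.
Proof.
elim/last_ind: w => [|w a [k Hk]]; first by exists 0%N; rewrite /Defs.val mul0r.
exists (k * p + a * q ^ size w)%N.
rewrite val_rcons size_rcons natrD !natrM natrX -Hk /rr exprS.
have := qR_neq0; move=> hq.
field => //.
Qed.

Definition isnat (r : rat) := exists n : nat, r = n%:R.

Lemma natval_nat (w : word p) (n : nat) : V w = n%:R -> natval q w = n.
Proof.
move=> H; rewrite /natval H.
have -> : (n%:R : rat) = (n%:Z)%:~R by [].
by rewrite numq_int.
Qed.

Lemma inLP (w : word p) : inL q w <-> no_leading_zero w /\ isnat (V w).
Proof.
rewrite /inL; split.
  by case/andP => -> /eqP H; split => //; exists (natval q w).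
case => -> [n Hn]; rewrite (natval_nat Hn) Hn eqxx; done.
Qed.

Lemma nlz_cat (u z : word p) : u != [::] -> no_leading_zero (u ++ z) = no_leading_zero u.
Proof. by case: u. Qed.

Lemma isnat_shift (c : nat) (X : rat) : 0 <= X -> (isnat (c%:R + X) <-> isnat X).
Proof.
move=> X0; split.
  case=> n Hn.
  have : (c%:R : rat) <= n%:R by rewrite -Hn lerDl.
  rewrite ler_nat => hcn.
  exists (n - c)%N; rewrite natrB //; rewrite -Hn; ring.
by case=> n ->; exists (c + n)%N; rewrite natrD.
Qed.


Lemma prefix_nat (w : word p) (a : 'I_p) : coprime p q ->
  isnat (V (rcons w a)) -> isnat (V w).
Proof.
move=> cop [M HM]; have [k Hk] := val_qnat w.
have hq := qR_neq0.
have E : (k * p + a * q ^ size w)%N = (q ^ (size w).+1 * M)%N.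
  apply/eqP; rewrite -(eqr_nat rat) natrD !natrM !natrX -Hk -HM val_rcons /rr.
  apply/eqP; rewrite exprS; field => //.
have D : (q ^ size w %| k * p)%N.
  have : (q ^ size w %| k * p + a * q ^ size w)%N by rewrite E expnS -mulnA mulnCA dvdn_mulr.
  by rewrite dvdn_addl // dvdn_mull.
rewrite Gauss_dvdl in D; last by rewrite coprimeXl // coprime_sym.
case/dvdnP: D => t Ht; exists t.
have hqn : (q%:R : rat) ^+ size w != 0 by rewrite expf_neq0.
apply: (mulIf hqn); rewrite Hk Ht natrM natrX //.
Qed.

Lemma child (w : word p) : (q < p)%N -> isnat (V w) -> exists c : 'I_p, isnat (V (rcons w c)).
Proof.
move=> qp [n Hn].
set t := ((p * n) %% q)%N.
have ht : (t < q)%N by rewrite ltn_mod.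
have hc : ((q - t) %% q < p)%N by apply: ltn_trans qp; rewrite ltn_mod.
exists (Ordinal hc).
have hdiv : (q %| p * n + (q - t) %% q)%N.
  rewrite /dvdn -modnDm modn_mod -/t modnDmr subnKC ?modnn //; exact: ltnW.
case/dvdnP: hdiv => m Hm.
exists m; rewrite val_rcons Hn /rr /=.
have hq := qR_neq0.
have : ((p * n + (q - t) %% q)%:R : rat) = (m * q)%:R by rewrite Hm.
rewrite natrD !natrM => E.
apply: (mulIf hq); rewrite mulrDl -E; field => //.
Qed.

Lemma QR (H k : nat) : (k <= H)%N -> ((q ^ H)%:R : rat) * rr ^+ k = (q ^ (H - k) * p ^ k)%:R.
Proof.
move=> kH; have hq := qR_neq0.
rewrite -{1}(subnK kH) expnD !natrM !natrX /rr expr_div_n; field.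
by rewrite expf_neq0.
Qed.

End Aux.

Lemma lexle_cat (s1 s2 t1 t2 : seq nat) : size s1 = size s2 ->
  lexle (s1 ++ t1) (s2 ++ t2) -> lexle s1 s2.
Proof.
elim: s1 s2 => [|a s1 IH] [|b s2] //= [hs] /orP [-> //|/andP [-> /= H]].
by rewrite (IH _ hs H) orbT.
Qed.

Lemma lexle_anti (s1 s2 : seq nat) : lexle s1 s2 -> lexle s2 s1 -> s1 = s2.
Proof.
elim: s1 s2 => [|a s1 IH] [|b s2] //= /orP [h1|/andP [/eqP e1 h1]] /orP [h2|/andP [/eqP e2 h2]].
- by move: (ltn_trans h1 h2); rewrite ltnn.
- by move: h1; rewrite e2 ltnn.
- by move: h2; rewrite e1 ltnn.
- by rewrite e1 (IH _ h1 h2).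
Qed.

Lemma mod_cancel (P Qm m n : nat) : coprime P Qm ->
  (m * P == n * P %[mod Qm]) -> (m == n %[mod Qm]).
Proof.
move=> cop; wlog nm : m n / (n <= m)%N.
  move=> Hw; case: (leqP n m) => h; first exact: Hw.
  move=> H; rewrite eq_sym; apply: (Hw n m (ltnW h)); by rewrite eq_sym.
have nmP : (n * P <= m * P)%N by rewrite leq_mul2r nm orbT.
rewrite (eqn_mod_dvd _ nmP) -mulnBl Gauss_dvdl; last by rewrite coprime_sym.
by rewrite (eqn_mod_dvd _ nm).
Qed.
From Stdlib Require Import Classical.

Local Open Scope ring_scope.

Lemma factor_some (p q : nat) (B : finType) (x : nat -> B) (w z : word p) (H : nat) :
  factor q x w H z != None -> inL q (w ++ z) /\ (size z <= H)%N.
Proof. by rewrite /factor; case: ifP => // /andP [-> ->]. Qed.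

Lemma inL_nlz (p q : nat) (w : word p) : inL q w -> no_leading_zero w.
Proof. by case/andP. Qed.

Lemma inL_val (p q : nat) (w : word p) : inL q w -> Defs.val q w = (natval q w)%:R.
Proof. by case/andP => _ /eqP. Qed.

Lemma half (p q : nat) (B : finType) (x : nat -> B) (h : nat) (U U1 U2 : factorT p B)
  (u v s1 s2 : word p) (b1 b2 : 'I_p) :
 (0 < q)%N -> (q < p)%N -> coprime p q ->
 u != [::] -> v != [::] -> inL q v ->
 feq (factor q x u h.+1) U1 -> feq (factor q x v h.+1) U2 ->
 extends h U U1 -> extends h U U2 ->
 U1 (rcons s1 b1) != None -> size s1 = h -> size s2 = h ->
 (forall w, size w = h.+1 -> U2 w != None ->
    lexle (map (@nat_of_ord p) (rcons s2 b2)) (map (@nat_of_ord p) w)) ->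
 lexle (map (@nat_of_ord p) s2) (map (@nat_of_ord p) s1).
Proof.
move=> q0 qp cop nu nv iv fu fv E1 E2 n1 hs1 hs2 m2.
move: n1; rewrite -fu => /factor_some [i1 _].
have i1' : inL q (u ++ s1).
  apply/inLP; move/inLP: i1 => [nl i1]; split; first by move: nl; rewrite !nlz_cat.
  by apply: (@prefix_nat p q q0 _ b1) => //; rewrite -rcons_cat in i1.
have n2 : U2 s1 != None.
  rewrite (E2 s1) ?hs1 // -(E1 s1) ?hs1 // -fu /factor i1' hs1 leqnSn //.
move: n2; rewrite -fv => /factor_some [i2 _].
move/inLP: (i2) => [nl2 i2n].
have [c hc] := child q0 qp i2n.
have n3 : U2 (rcons s1 c) != None.
  rewrite -fv /factor size_rcons hs1 leqnn /=.
  have -> : inL q (v ++ rcons s1 c).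
    by apply/inLP; split; [rewrite nlz_cat // -(nlz_cat s1 nv) | rewrite -rcons_cat].
  by [].
have hsz : size (rcons s1 c) = h.+1 by rewrite size_rcons hs1.
have := m2 _ hsz n3.
rewrite !map_rcons -!cats1; apply: lexle_cat; by rewrite !size_map hs1 hs2.
Qed.

Theorem mainTheorem11 (p q : nat) (B Q : finType) (q0 : Q)
    (delta : Q -> 'I_p -> Q) (tau : Q -> B) (x : nat -> B) (h : nat) :
  (1 < q)%N -> (q < p)%N -> coprime p q ->
  generated q q0 delta tau x ->
  aut_property q q0 delta tau h ->
  forall j : nat, (j <= q - 1)%N ->
  forall U : factorT p B, in_Finf q x h U ->
  forall U1 U2 : factorT p B,
    in_Finf_a q x h.+1 (wj0 p q j) U1 ->
    in_Finf_a q x h.+1 (wj0 p q j) U2 ->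
    extends h U U1 -> extends h U U2 ->
    feq U1 U2.
Proof.
move=> q1 qp cop gen aut j _ U _ U1 U2 [F1 L1] [F2 L2] E1 E2.
have qpos : (0 < q)%N by apply: ltn_trans q1.
have pick : forall U' : factorT p B, in_Finf q x h.+1 U' ->
    exists u, [/\ inL q u, u != [::] & feq (factor q x u h.+1) U'].
  move=> U' F; apply: NNPP => H; apply: F; exists [:: [::]] => w iw fw.
  rewrite inE; apply/eqP; apply: NNPP => nw; apply: H; exists w; split => //.
  exact/eqP.
have [u [iu nu fu]] := pick _ F1.
have [v [iv nv fv]] := pick _ F2.
case: L1 => z1 [sz1 n1 [s1 [b1 [ez1 eb1]]] m1].
case: L2 => z2 [sz2 n2 [s2 [b2 [ez2 eb2]]] m2].
have hs1 : size s1 = h by move: sz1; rewrite ez1 size_rcons => [[]].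
have hs2 : size s2 = h by move: sz2; rewrite ez2 size_rcons => [[]].
have n1' : U1 (rcons s1 b1) != None by rewrite -ez1.
have n2' : U2 (rcons s2 b2) != None by rewrite -ez2.
have m1' : forall w, size w = h.+1 -> U1 w != None ->
    lexle (map (@nat_of_ord p) (rcons s1 b1)) (map (@nat_of_ord p) w) by rewrite -ez1.
have m2' : forall w, size w = h.+1 -> U2 w != None ->
    lexle (map (@nat_of_ord p) (rcons s2 b2)) (map (@nat_of_ord p) w) by rewrite -ez2.
have l21 := half qpos qp cop nu nv iv fu fv E1 E2 n1' hs1 hs2 m2'.
have l12 := half qpos qp cop nv nu iu fv fu E2 E1 n2' hs2 hs1 m1'.
have es : s1 = s2 by apply: (inj_map val_inj); apply: lexle_anti.
have eb : b1 = b2 by apply: val_inj; rewrite /= eb1 eb2.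
have ez : z2 = z1 by rewrite ez1 ez2 es eb.
move: n1; rewrite -fu => /factor_some [iuz _].
move: n2; rewrite ez -fv => /factor_some [ivz _].
set H := h.+1.
have Hu := inL_val iu; have Hv := inL_val iv.
have [Z HZ] := val_qnat qpos z1.
have hq := qR_neq0 qpos.
have key : forall w, inL q w -> inL q (w ++ z1) ->
    (natval q w * p ^ H + Z = natval q (w ++ z1) * q ^ H)%N.
  move=> w iw iwz; apply/eqP; rewrite -(eqr_nat rat) natrD !natrM !natrX.
  rewrite -HZ -(inL_val iw) -(inL_val iwz) val_cat sz1 /rr expr_div_n.
  apply/eqP; field; by rewrite expf_neq0.
have Hmod : (natval q u == natval q v %[mod q ^ H]).
  apply: (mod_cancel (P := p ^ H)); first by rewrite coprimeXl // coprimeXr.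
  rewrite -(eqn_modDr Z) (key _ iu iuz) (key _ iv ivz) !modnMl //.
have hd : deltaw delta q0 u = deltaw delta q0 v.
  case: (eqVneq (deltaw delta q0 u) (deltaw delta q0 v)) => // hne.
  exfalso.
  have hm : natval q u = natval q v %[mod q ^ h].
    have D : (q ^ h %| q ^ H)%N by rewrite dvdn_exp2l.
    by rewrite -(modn_dvdm (natval q u) D) (eqP Hmod) modn_dvdm.
  have [w [iuw sw ht]] := aut u v iu iv hm (elimN eqP hne).
  have sw' : (size w <= H)%N by apply: leq_trans sw _.
  have f1 : U1 w = Some (x (natval q (u ++ w))) by rewrite -fu /factor sw' iuw.
  have f2 : U2 w = U1 w by rewrite (E2 w sw) (E1 w sw).
  move: f2; rewrite f1 -fv /factor sw' /=.
  case: ifP => // ivw [e].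
  apply: ht; by rewrite -(gen _ _ iuw) -(gen _ _ ivw) e.
set Qm := (q ^ H)%N.
have dom : forall w : word p, (size w <= H)%N -> inL q (u ++ w) = inL q (v ++ w).
  move=> w sw.
  set R := (natval q u %% Qm)%N.
  have hR : (natval q v %% Qm)%N = R by rewrite /R (eqP Hmod).
  have X0 : 0 <= R%:R * rr p q ^+ size w + Defs.val q w.
    by apply: addr_ge0; [apply: mulr_ge0; [|apply: exprn_ge0; apply: divr_ge0] | apply: val_ge0].
  have dec : forall t : word p, inL q t -> (natval q t %% Qm)%N = R ->
      Defs.val q (t ++ w) = (natval q t %/ Qm * (q ^ (H - size w) * p ^ size w))%:R
        + (R%:R * rr p q ^+ size w + Defs.val q w).
    move=> t it ht; rewrite val_cat (inL_val it) {1}(divn_eq (natval q t) Qm) ht.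
    rewrite [X in _ = X + _]natrM -(QR p qpos sw) -/Qm natrD natrM; ring.
  have nlu := inL_nlz iu; have nlv := inL_nlz iv.
  apply/idP/idP => /inLP [_ hn]; apply/inLP.
    split; first by rewrite nlz_cat.
    move: hn; rewrite (dec _ iu erefl) (dec _ iv hR) !isnat_shift //.
  split; first by rewrite nlz_cat.
  move: hn; rewrite (dec _ iu erefl) (dec _ iv hR) !isnat_shift //.
move=> w; rewrite -fu -fv /factor.
case: (leqP (size w) H) => sw //=.
rewrite (dom w sw); case: ifP => // ivw.
have iuw : inL q (u ++ w) by rewrite dom.
rewrite (gen _ _ iuw) (gen _ _ ivw) /deltaw !foldl_cat.
by move: hd; rewrite /deltaw => ->.
Qed.
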